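(* For every $n \ge 1$ and every proximity parameter $0<\epsilon<1$, there exists a non-adaptive $\epsilon$-tester with one-sided error for convexity of functions $f\colon [n]\to\mathbb{R}$, where $[n]=\{0,1,\dots,n-1\}$, whose query complexity is $O\!\left(\frac{\log(\epsilon n)}{\epsilon}\right)$.
   Context: A function $f\colon X\to\mathbb{R}$ on a finite set $X\subseteq\mathbb{R}^d$ is convex if for every finite collection $x_1,\dots,x_k\in X$ and reals $\lambda_i\ge 0$ with $\sum_i\lambda_i=1$ and $\sum_i\lambda_i x_i\in X$, one has $f(\sum_i\lambda_i x_i)\le\sum_i\lambda_i f(x_i)$. A function $g\colon X\to\mathbb{R}$ is $\epsilon$-far from convex if every convex $h\colon X\to\mathbb{R}$ differs from $g$ on at least $\epsilon|X|$ points of $X$. An $\epsilon$-tester for convexity is a randomized algorithm that queries values of an unknown $f$ and accepts with probability at least $2/3$ if $f$ is convex and rejects with probability at least $2/3$ if $f$ is $\epsilon$-far from convex; it has one-sided error if it accepts every convex function with probability $1$, and is non-adaptive if all queried points are chosen before any value is observed. The query complexity is the worst-case number of queries. *)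

(* Defs.v *)
From HB Require Import structures.
From mathcomp Require Import all_boot all_order all_algebra.
From mathcomp Require Import reals exp.
Set Implicit Arguments. Unset Strict Implicit. Unset Printing Implicit Defensive.
Import Order.TTheory GRing.Theory Num.Theory.
Local Open Scope ring_scope.

Section Defs.
Variable R : realType.

Definition convex_fun (n : nat) (f : 'I_n -> R) : Prop :=
  forall (k : nat) (x : 'I_k -> 'I_n) (lam : 'I_k -> R),
    (forall i, 0 <= lam i) -> \sum_(i < k) lam i = 1 ->
    forall y : 'I_n, \sum_(i < k) lam i * (x i)%:R = y%:R ->
      f y <= \sum_(i < k) lam i * f (x i).

Definition eps_far (n : nat) (eps : R) (g : 'I_n -> R) : Prop :=
  forall h : 'I_n -> R, convex_fun h ->
    eps * n%:R <= (#|[set x : 'I_n | g x != h x]|)%:R.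

(* A randomized non-adaptive tester: a finite probability space of seeds
   (Omega, D); on seed w it queries the points Q w (chosen before any value
   is seen) and outputs dec w applied to the sequence of observed values. *)
Definition is_distr (Omega : finType) (D : Omega -> R) : Prop :=
  (forall w, 0 <= D w) /\ \sum_(w : Omega) D w = 1.

Definition acc_prob (n : nat) (Omega : finType) (D : Omega -> R)
  (Q : Omega -> seq 'I_n) (dec : Omega -> seq R -> bool) (f : 'I_n -> R) : R :=
  \sum_(w : Omega) D w * (dec w (map f (Q w)) : nat)%:R.

Definition nonadaptive_1sided_tester (n : nat) (eps : R) (q : nat)
  (Omega : finType) (D : Omega -> R) (Q : Omega -> seq 'I_n)
  (dec : Omega -> seq R -> bool) : Prop :=
  [/\ is_distr D,
      forall w, (size (Q w) <= q)%N,
      forall f : 'I_n -> R, convex_fun f -> acc_prob D Q dec f = 1 &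
      forall f : 'I_n -> R, eps_far eps f -> acc_prob D Q dec f <= 1 / 3].

End Defs.

(* Main.v *)
Require Import Defs.
From HB Require Import structures.
From mathcomp Require Import all_boot all_order all_algebra.
From mathcomp Require Import reals exp.
From mathcomp Require Import ring lra zify.
Import Order.TTheory GRing.Theory Num.Theory.
Local Open Scope ring_scope.
Set Implicit Arguments. Unset Strict Implicit. Unset Printing Implicit Defensive.

Section S.
Variable R : realType.
Variable N : nat.
Implicit Types f : 'I_N -> R.

Definition tri f (a b c : 'I_N) : bool :=
  (c%:R - a%:R) * f b <= (c%:R - b%:R) * f a + (b%:R - a%:R) * f c.

Definition fconvb (S : {set 'I_N}) f : bool :=
  [forall a, forall b, forall c,
     [&& a \in S, b \in S, c \in S, (a < b)%N & (b < c)%N] ==> tri f a b c].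

Lemma fconvP S f a b c : fconvb S f -> a \in S -> b \in S -> c \in S ->
  (a < b)%N -> (b < c)%N -> tri f a b c.
Proof.
move=> /forallP /(_ a) /forallP /(_ b) /forallP /(_ c) /implyP H *; apply: H.
by apply/and5P.
Qed.

Lemma fconv_sub (S T : {set 'I_N}) f : S \subset T -> fconvb T f -> fconvb S f.
Proof.
move=> /subsetP sST H; apply/forallP=> a; apply/forallP=> b; apply/forallP=> c.
apply/implyP=> /and5P [aS bS cS ab bc]; apply: fconvP H _ _ _ ab bc; exact: sST.
Qed.

Lemma convex_fconv S f : convex_fun f -> fconvb S f.
Proof.
move=> cf; apply/forallP=> a; apply/forallP=> b; apply/forallP=> c.
apply/implyP=> /and5P [_ _ _ ab bc].
have ac : (a < c)%N by apply: ltn_trans ab bc.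
have hca : 0 < c%:R - a%:R :> R by rewrite subr_gt0 ltr_nat.
pose x (i : 'I_2) := if val i == 0%N then a else c.
pose lam (i : 'I_2) : R := if val i == 0%N then (c%:R - b%:R) / (c%:R - a%:R)
                           else (b%:R - a%:R) / (c%:R - a%:R).
have := cf 2%N x lam _ _ b.
rewrite !big_ord_recr !big_ord0 /= !add0r /x /lam /=.
have hb1 : a%:R < b%:R :> R by rewrite ltr_nat.
have hb2 : b%:R < c%:R :> R by rewrite ltr_nat.
move=> H.
idtac.
rewrite /tri.
have H1 : f b <= (c%:R - b%:R) / (c%:R - a%:R) * f a + (b%:R - a%:R) / (c%:R - a%:R) * f c.
  apply: H.
  - case=> [[|[|]]] //= _; apply: divr_ge0; lra.
  - by field; lra.
  - by field; lra.
rewrite -[_ * f b]mulrC -ler_pdivlMr // ; apply: (le_trans H1); rewrite le_eqVlt; apply/orP; left; apply/eqP.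
by field; lra.
Qed.


Definition sec f (c c' : 'I_N) (z : R) := f c + (f c' - f c) * (z - c%:R).

Lemma sec_below S f (c c' z : 'I_N) : fconvb S f -> c \in S -> c' \in S ->
  z \in S -> val c' = c.+1 -> sec f c c' z%:R <= f z.
Proof.
move=> H cS c'S zS ec'; rewrite /sec.
have ec'R : (c'%:R : R) = c%:R + 1 by rewrite ec' -addn1 natrD.
case: (ltngtP z c) => zc.
- have cc' : (c < c')%N by rewrite ec'.
  have := fconvP H zS cS c'S zc cc'.
  rewrite /tri ec'R => T.
  have : (z%:R : R) < c%:R by rewrite ltr_nat.
  move=> ?; nra.
- have zc' : (c' < z)%N || (z == c').
    case: eqVneq => [_|ne]; rewrite ?orbT // orbF ltn_neqAle; apply/andP; split; [by apply: contra ne => /eqP e; apply/eqP/val_inj | by move: ec' => /= ->].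
  case/orP: zc' => [zc'|/eqP ->].
  + have cc' : (c < c')%N by rewrite ec'.
    have := fconvP H cS c'S zS cc' zc'.
    rewrite /tri ec'R => T.
    have : (c'%:R : R) < z%:R by rewrite ltr_nat.
    rewrite ec'R => ?; nra.
  + rewrite ec'R; lra.
- have -> : z = c by apply: val_inj.
  lra.
Qed.


Lemma lemA (S1 S2 : {set 'I_N}) f (c c' d d' g : 'I_N) :
  fconvb S1 f -> fconvb S2 f ->
  c \in S1 -> c' \in S1 -> d \in S1 -> d' \in S1 ->
  d \in S2 -> d' \in S2 -> g \in S2 ->
  val c' = c.+1 -> val d' = d.+1 ->
  ((c <= d)%N && (d <= g)%N) || ((d <= c)%N && (g <= d')%N) ->
  sec f c c' g%:R <= f g.
Proof.
move=> H1 H2 cS c'S dS d'S dS2 d'S2 gS ec' ed' hyp.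
apply: le_trans (sec_below H2 dS2 d'S2 gS ed').
have h1 := sec_below H1 cS c'S dS ec'.
have h2 := sec_below H1 cS c'S d'S ec'.
have h3 := sec_below H1 dS d'S cS ed'.
have h4 := sec_below H1 dS d'S c'S ed'.
move: h1 h2 h3 h4; rewrite /sec.
have ec'R : (c'%:R : R) = c%:R + 1 by rewrite ec' -addn1 natrD.
have ed'R : (d'%:R : R) = d%:R + 1 by rewrite ed' -addn1 natrD.
rewrite ec'R ed'R.
set sc := f c' - f c; set sd := f d' - f d.
have -> : f c' = f c + sc by rewrite /sc; lra.
have -> : f d' = f d + sd by rewrite /sd; lra.
move=> h1 h2 h3 h4.
case/orP: hyp => /andP [le1 le2].
- have l1 : (c%:R : R) <= d%:R by rewrite ler_nat.
  have l2 : (d%:R : R) <= g%:R by rewrite ler_nat.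
  have hs : sc <= sd.
    have : 0 <= (sd - sc) * (d%:R + 1 - c%:R) by nra.
    rewrite pmulr_lge0; first by rewrite subr_ge0.
    lra.
  nra.
- have l1 : (d%:R : R) <= c%:R by rewrite ler_nat.
  have l2 : (g%:R : R) <= d%:R + 1 by rewrite -ed'R ler_nat.
  have hs : sd <= sc.
    have : 0 <= (sc - sd) * (c%:R + 1 - d%:R) by nra.
    rewrite pmulr_lge0; first by rewrite subr_ge0.
    lra.
  nra.
Qed.


Lemma sec_aff f c c' k (lam : 'I_k -> R) (x : 'I_k -> 'I_N) (y : R) :
  \sum_(i < k) lam i = 1 -> \sum_(i < k) lam i * (x i)%:R = y ->
  sec f c c' y = \sum_(i < k) lam i * sec f c c' (x i)%:R.
Proof.
move=> s1 sy.
have E z : sec f c c' z = (f c - (f c' - f c) * c%:R) + (f c' - f c) * z.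
  by rewrite /sec; ring.
rewrite E; under eq_bigr do rewrite E mulrDr.
rewrite big_split /= -mulr_suml s1 mul1r -sy mulr_sumr; congr (_ + _).
by apply: eq_bigr => i _; ring.
Qed.

Lemma max_affine_convex (G : {set 'I_N}) (L : 'I_N -> R -> R) (b0 : 'I_N) :
  (forall b k (lam : 'I_k -> R) (x : 'I_k -> 'I_N) (y : R),
     \sum_(i < k) lam i = 1 -> \sum_(i < k) lam i * (x i)%:R = y ->
     L b y = \sum_(i < k) lam i * L b (x i)%:R) ->
  b0 \in G ->
  convex_fun (fun z : 'I_N => \big[Num.max/L b0 z%:R]_(b in G) L b z%:R).
Proof.
move=> aff b0G k x lam lam0 s1 y sy.
apply/bigmax_leP; split; last first.
- move=> b bG; rewrite (aff b k lam x y%:R s1 sy).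
  apply: ler_sum => i _; apply: ler_wpM2l; first exact: lam0.
  exact: le_bigmax_cond.
- rewrite (aff b0 k lam x y%:R s1 sy).
  apply: ler_sum => i _; apply: ler_wpM2l; first exact: lam0.
  exact: le_bigmax_cond.
Qed.


Lemma self_in (P : 'I_N -> {set 'I_N}) (cf cf' : 'I_N -> 'I_N) b :
  cf b \in P b -> cf' b \in P b -> (val (cf b) = b \/ val (cf' b) = b) -> b \in P b.
Proof.
move=> h1 h2 [e|e].
  by have E : cf b = b := val_inj e; rewrite -{1}E.
by have E : cf' b = b := val_inj e; rewrite -{1}E.
Qed.

Lemma ext (P : 'I_N -> {set 'I_N}) f (G : {set 'I_N}) (cf cf' : 'I_N -> 'I_N) :
 (forall b, b \in G -> fconvb (P b) f) ->
 (forall b, b \in G -> [/\ val (cf' b) = (cf b).+1, cf b \in P b, cf' b \in P b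
                         & (val (cf b) = b \/ val (cf' b) = b)]) ->
 (forall b g, b \in G -> g \in G -> (b < g)%N -> exists d d' : 'I_N,
     [/\ val d' = d.+1, d \in P b :&: P g, d' \in P b :&: P g, (b <= d)%N
       & (d' <= g)%N]) ->
 exists h, convex_fun h /\ forall x, x \in G -> h x = f x.
Proof.
move=> conv pair split.
pose L b z := sec f (cf b) (cf' b) z.
have key b g : b \in G -> g \in G -> L b g%:R <= f g.
  move=> bG gG.
  have [e1 c1 c'1 o1] := pair b bG.
  have [e2 c2 c'2 o2] := pair g gG.
  have gP := self_in c2 c'2 o2.
  have [cb cb'] : (cf b <= b)%N /\ (b <= cf b + 1)%N.
    move: e1 o1 => /= e1 o1; case: o1; lia.
  case: (ltngtP b g) => bg.
  - have [d [d' [ed /setIP [dP1 dP2] /setIP [d'P1 d'P2] bd dg]]] := split b g bG gG bg.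
    apply: (lemA (conv b bG) (conv g gG) c1 c'1 dP1 d'P1 dP2 d'P2 gP e1 ed).
    move: (ed) => /= ed2; apply/orP; left; apply/andP; split; lia.
  - have [d [d' [ed /setIP [dP1 dP2] /setIP [d'P1 d'P2] bd dg]]] := split g b gG bG bg.
    apply: (lemA (conv b bG) (conv g gG) c1 c'1 dP2 d'P2 dP1 d'P1 gP e1 ed).
    move: (ed) => /= ed2; apply/orP; right; apply/andP; split; lia.
  - have -> : g = b by apply: val_inj.
    rewrite /L /sec.
    case: o1 => e.
    + by have E : cf b = b := val_inj e; rewrite E subrr mulr0 addr0.
    + have -> : (b%:R : R) = (cf b)%:R + 1 by rewrite -e e1 -addn1 natrD.
      have -> : f b = f (cf' b) by congr f; apply: val_inj.
      rewrite le_eqVlt; apply/orP; left; apply/eqP; ring.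
case: (pickP (fun b => b \in G)) => [b0 b0G|G0].
- exists (fun z : 'I_N => \big[Num.max/L b0 z%:R]_(b in G) L b z%:R); split.
  + apply: max_affine_convex b0G => b k lam x y s1 sy.
    exact: sec_aff.
  + move=> x xG; apply/le_anti/andP; split.
    * apply/bigmax_leP; split; first exact: key.
      by move=> b bG; apply: key.
    * apply: le_trans (le_bigmax_cond _ _ xG).
      have [e1 c1 c'1 o1] := pair x xG.
      rewrite /L /sec; case: o1 => e.
      - by have E : cf x = x := val_inj e; rewrite E subrr mulr0 addr0.
      - have -> : (x%:R : R) = (cf x)%:R + 1 by rewrite -e e1 -addn1 natrD.
        have -> : f x = f (cf' x) by congr f; apply: val_inj.
        rewrite le_eqVlt; apply/orP; left; apply/eqP; ring.
- exists (fun _ => 0); split; last by move=> x; rewrite G0.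
  move=> k x lam _ _ y _; rewrite big1 // => i _; exact: mulr0.
Qed.

End S.

Local Open Scope nat_scope.

Section C.
Variable n : nat.
Local Notation N := n.+1.

Definition Hs (J : nat) : {set 'I_N} := [set y : 'I_N | (2^J %| y) || (2^J %| y.+1)].
Definition Nb (j : nat) (x : 'I_N) : {set 'I_N} :=
  [set y : 'I_N | [exists k : 'I_4, exists e : 'I_2,
     val y == ((x %/ 2^j + k) - 2) * 2^j - e]].
Definition Pset (J : nat) (x : 'I_N) : {set 'I_N} :=
  Hs J :|: \bigcup_(j < J) Nb j x.

Lemma inNb j (x y : 'I_N) (k : 'I_4) (e : 'I_2) :
  val y = ((x %/ 2^j + k) - 2) * 2^j - e -> y \in Nb j x.
Proof.
by move=> E; rewrite inE; apply/existsP; exists k; apply/existsP; exists e; apply/eqP.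
Qed.

Lemma Nb_sub j (x : 'I_N) (J : nat) : (j < J)%N -> Nb j x \subset Pset J x.
Proof.
move=> jJ; apply/subsetP => y yN; rewrite inE; apply/orP; right.
by apply/bigcupP; exists (Ordinal jJ).
Qed.

Lemma Hs_sub J (x : 'I_N) : Hs J \subset Pset J x.
Proof. by apply/subsetP => y yH; rewrite inE yH. Qed.

Lemma split_prop J (b g : 'I_N) : (b < g)%N ->
  exists d d' : 'I_N, [/\ val d' = d.+1, d \in Pset J b :&: Pset J g,
     d' \in Pset J b :&: Pset J g, (b <= d)%N & (d' <= g)%N].
Proof.
move=> bg.
have gN := ltn_ord g.
case: (leqP (2^J) (g - b)) => hJ.
- set p := 2^J.
  have p0 : (0 < p)%N by rewrite expn_gt0.
  set m := (b %/ p).+1 * p.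
  have bm : (b < m)%N by apply: ltn_ceil.
  have mle : (m <= b + p)%N.
    by rewrite /m mulSn addnC leq_add2r leq_divM.
  have mN : (m < N)%N by lia.
  have dN : (m.-1 < N)%N by lia.
  exists (Ordinal dN), (Ordinal mN) => /=.
  have pm : (p %| m) by rewrite /m dvdn_mull.
  have H1 : Ordinal dN \in Hs J by rewrite inE /= prednK ?pm ?orbT //; lia.
  have H2 : Ordinal mN \in Hs J by rewrite inE /= pm.
  split; first by lia.
  + by rewrite inE !(subsetP (Hs_sub J _)).
  + by rewrite inE !(subsetP (Hs_sub J _)).
  + lia.
  + lia.
- set j := trunc_log 2 (g - b).
  have gb0 : (0 < g - b)%N by lia.
  have /andP [lo hi] : (2^j <= g - b < 2^j.+1)%N by apply: trunc_log_bounds.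
  have jJ : (j < J)%N.
    by rewrite -(ltn_exp2l _ _ (isT : (1 < 2)%N)); apply: leq_ltn_trans hJ.
  set q := 2^j.
  have q0 : (0 < q)%N by rewrite expn_gt0.
  have q2 : (2^j.+1 = q + q)%N by rewrite expnS /q; lia.
  set u := b %/ q.
  set v := g %/ q.
  set m := u.+1 * q.
  have bm : (b < m)%N by apply: ltn_ceil.
  have mle : (m <= b + q)%N.
    by rewrite /m mulSn addnC leq_add2r leq_divM.
  have mg : (m <= g)%N by lia.
  have mN : (m < N)%N by lia.
  have dN : (m.-1 < N)%N by lia.
  have uv1 : (u.+1 <= v)%N by rewrite /v leq_divRL.
  have uv2 : (v < u + 3)%N.
    rewrite /v ltn_divLR // mulnDl.
    have : (m = u * q + q)%N by rewrite /m mulSn addnC.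
    lia.
  have k0 : (u + 3 - v < 4)%N by lia.
  have k1 : (3 < 4)%N by [].
  have e0 : (0 < 2)%N by [].
  have e1 : (1 < 2)%N by [].
  have mb e : (e < 2)%N -> (m - e = ((b %/ 2^j + 3) - 2) * 2^j - e)%N.
    by move=> _; rewrite -/q -/u /m; congr (_ * _ - _)%N; lia.
  have mg' e : (e < 2)%N -> (m - e = ((g %/ 2^j + (u + 3 - v)) - 2) * 2^j - e)%N.
    by move=> _; rewrite -/q -/v /m; congr (_ * _ - _)%N; lia.
  exists (Ordinal dN), (Ordinal mN) => /=.
  have Ed : m.-1 = (m - 1)%N by lia.
  split; first by lia.
  + rewrite inE; apply/andP; split; apply: (subsetP (Nb_sub _ jJ)).
    * by apply: (inNb (k:=Ordinal k1) (e:=Ordinal e1)); rewrite /= Ed mb.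
    * by apply: (inNb (k:=Ordinal k0) (e:=Ordinal e1)); rewrite /= Ed mg'.
  + rewrite inE; apply/andP; split; apply: (subsetP (Nb_sub _ jJ)).
    * by apply: (inNb (k:=Ordinal k1) (e:=Ordinal e0)); rewrite /= -(subn0 m) mb.
    * by apply: (inNb (k:=Ordinal k0) (e:=Ordinal e0)); rewrite /= -(subn0 m) mg'.
  + lia.
  + lia.
Qed.


Definition cf (b : 'I_N) : 'I_N := if (b < n)%N then b else inord b.-1.
Definition cf' (b : 'I_N) : 'I_N := inord (cf b).+1.

Lemma pair_prop J (b : 'I_N) : (0 < n)%N -> (0 < J)%N ->
  [/\ val (cf' b) = (cf b).+1, cf b \in Pset J b, cf' b \in Pset J b
    & (val (cf b) = b \/ val (cf' b) = b)].
Proof.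
move=> n0 J0.
have bn := ltn_ord b.
have k2 : (2 < 4)%N by [].
have k3 : (3 < 4)%N by [].
have e0 : (0 < 2)%N by [].
have e1 : (1 < 2)%N by [].
have vcf : nat_of_ord (cf b) = (if (b < n)%N then (b : nat) else b.-1).
  by rewrite /cf; case: ifP => //= _; rewrite inordK //; lia.
have vcf' : nat_of_ord (cf' b) = (cf b).+1.
  by rewrite /cf' inordK // vcf; case: ifP => /=; lia.
have sub0 := Nb_sub b J0.
split => //.
- apply: (subsetP sub0); case: (boolP (b < n)%N) => bn'.
  + apply: (inNb (k:=Ordinal k2) (e:=Ordinal e0)) => /=.
    by rewrite vcf bn' expn0 divn1 muln1; lia.
  + apply: (inNb (k:=Ordinal k2) (e:=Ordinal e1)) => /=.
    rewrite expn0 divn1 muln1 vcf (negbTE bn'); lia.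
- apply: (subsetP sub0); case: (boolP (b < n)%N) => bn'.
  + apply: (inNb (k:=Ordinal k3) (e:=Ordinal e0)) => /=.
    by rewrite expn0 divn1 muln1 vcf' vcf bn'; lia.
  + apply: (inNb (k:=Ordinal k2) (e:=Ordinal e0)) => /=.
    rewrite expn0 divn1 muln1 vcf' vcf (negbTE bn'); lia.
- rewrite /= vcf' vcf; case: ifP => bn'; [left | right]; lia.
Qed.

Lemma card_Nb j (x : 'I_N) : (#|Nb j x| <= 8)%N.
Proof.
pose F (ke : 'I_4 * 'I_2) : 'I_N := inord (((x %/ 2^j + ke.1) - 2) * 2^j - ke.2).
apply: (@leq_trans #|[set F ke | ke : 'I_4 * 'I_2]|).
  apply: subset_leq_card; apply/subsetP => y; rewrite inE.
  case/existsP => k /existsP [e /eqP E]; apply/imsetP; exists (k, e) => //.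
  by rewrite /F /= -E inord_val.
by apply: leq_trans (leq_imset_card _ _) _; rewrite card_prod !card_ord.
Qed.

Lemma card_Hs J : (#|Hs J| <= 2 * (N %/ 2^J).+1)%N.
Proof.
set p := 2^J.
have p0 : (0 < p)%N by rewrite expn_gt0.
pose F (ke : 'I_(N %/ p).+1 * 'I_2) : 'I_N := inord (ke.1 * p - ke.2).
apply: (@leq_trans #|[set F ke | ke : 'I_(N %/ p).+1 * 'I_2]|).
  apply: subset_leq_card; apply/subsetP => y; rewrite inE => /orP [dy|dy].
  + have k1 : (y %/ p < (N %/ p).+1)%N.
      by rewrite ltnS leq_div2r // ltnW.
    have e0 : (0 < 2)%N by [].
    apply/imsetP; exists (Ordinal k1, Ordinal e0) => //.
    by rewrite /F /= subn0 divnK // inord_val.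
  + have k1 : (y.+1 %/ p < (N %/ p).+1)%N.
      by rewrite ltnS leq_div2r // ltn_ord.
    have e1 : (1 < 2)%N by [].
    apply/imsetP; exists (Ordinal k1, Ordinal e1) => //.
    by rewrite /F /= divnK // subn1 /= inord_val.
by apply: leq_trans (leq_imset_card _ _) _; rewrite card_prod !card_ord mulnC.
Qed.

End C.

Lemma card_bigcup_le (T : finType) m (A : 'I_m -> {set T}) :
  (#|\bigcup_(i < m) A i| <= \sum_(i < m) #|A i|)%N.
Proof.
elim: m A => [|m IH] A; first by rewrite !big_ord0 cards0.
rewrite !big_ord_recr /=; apply: leq_trans (leq_card_setU _ _).1 _.
by rewrite leq_add2r; exact: IH.
Qed.

Local Open Scope ring_scope.

Section M.
Variable R : realType.

Lemma fconvb_ext N (S : {set 'I_N}) (f g : 'I_N -> R) :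
  (forall y, y \in S -> g y = f y) -> fconvb S g -> fconvb S f.
Proof.
move=> E H; apply/forallP=> a; apply/forallP=> b; apply/forallP=> c.
apply/implyP=> /and5P [aS bS cS ab bc].
by have := fconvP H aS bS cS ab bc; rewrite /tri !E.
Qed.

Lemma dec_map N (S : {set 'I_N}) (f : 'I_N -> R) :
  fconvb S (fun y => nth 0 (map f (enum S)) (index y (enum S))) = fconvb S f.
Proof.
have E y : y \in S -> nth 0 (map f (enum S)) (index y (enum S)) = f y.
  move=> yS; rewrite (nth_map y) ?index_mem ?mem_enum // nth_index // mem_enum //.
apply/idP/idP; apply: fconvb_ext => y yS; rewrite E //.
Qed.

Lemma convex1 (f : 'I_1 -> R) : convex_fun f.
Proof.
move=> k x lam _ s1 y _.
rewrite le_eqVlt; apply/orP; left; apply/eqP.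
under eq_bigr => i _ do rewrite (ord1 (x i)).
by rewrite -mulr_suml s1 mul1r (ord1 y).
Qed.

Lemma convex_triv N (f : 'I_N -> R) : (N <= 1)%N -> convex_fun f.
Proof.
move=> N1 k x lam _ s1 y _.
have E (a : 'I_N) : a = y.
  by apply: val_inj; have := ltn_ord a; have := ltn_ord y; rewrite /=; lia.
rewrite le_eqVlt; apply/orP; left; apply/eqP.
under eq_bigr => i _ do rewrite (E (x i)).
by rewrite -mulr_suml s1 mul1r.
Qed.

Lemma bernoulli (x : R) k : 0 <= x -> 1 + k%:R * x <= (1 + x) ^+ k.
Proof.
move=> x0; elim: k => [|k IH]; first by rewrite mul0r addr0 expr0.
rewrite exprS -natr1.
have : 0 <= (1 + x) ^+ k by apply: exprn_ge0; lra.
have : 0 <= k%:R :> R by [].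
nra.
Qed.

Lemma pow_small (eps : R) t : 0 < eps -> eps < 1 -> 2 < t%:R * eps ->
  (1 - eps) ^+ t <= 1 / 3.
Proof.
move=> e0 e1 te.
have b := bernoulli t (ltW e0).
have h1 : (1 - eps) ^+ t * (1 + eps) ^+ t <= 1.
  rewrite -exprMn; apply: exprn_ile1; nra.
have h2 : 0 <= (1 - eps) ^+ t by apply: exprn_ge0; lra.
nra.
Qed.

Lemma num_bound (T K L u v : R) : 0 <= T -> 0 <= K -> 0 <= L -> 1 <= u -> 0 < v ->
  T <= 3 * u -> K <= L * v -> T * (17 + 8 * K) + 2 <= (53 + 24 * v) * (1 + L) * u.
Proof.
move=> T0 K0 L0 u1 v0 Tu KL.
have h : T * (17 + 8 * K) <= 3 * u * (17 + 8 * (L * v)).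
  apply: ler_pM => //; lra.
have : 0 <= L * v by apply: mulr_ge0; lra.
nra.
Qed.

End M.

Unset Implicit Arguments.

Theorem theorem1p1 (R : realType) :
  exists C : R, 0 < C /\
  forall (n : nat) (eps : R), (1 <= n)%N -> 0 < eps -> eps < 1 ->
    exists (q : nat) (Omega : finType) (D : Omega -> R)
           (Q : Omega -> seq 'I_n) (dec : Omega -> seq R -> bool),
      q%:R <= C * (1 + ln (Num.max 1 (eps * n%:R))) / eps /\
      nonadaptive_1sided_tester eps q D Q dec.
Proof.
pose l2 : R := ln 2.
have l20 : 0 < l2 by apply: ln_gt0; lra.
have v0 : 0 < l2^-1 by rewrite invr_gt0.
exists (53 + 24 * l2^-1); split; first by lra.
case=> [//|n'] eps _ e0 e1.
pose t := (Num.truncn (2 / eps)).+1.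
have tgt : 2 / eps < t%:R by apply: truncnS_gt.
have tle : t%:R <= 2 / eps + 1.
  rewrite /t -natr1 lerD2r truncn_le; apply: divr_ge0; lra.
have t0 : (0 < t)%N by [].
pose tl := trunc_log 2 (n'.+1 %/ t).
pose J := tl.+2.
have hJ : (2 * n'.+1 < 2^J * t)%N.
  have := trunc_log_ltn (n'.+1 %/ t) (isT : (1 < 2)%N).
  rewrite ltn_divLR // -/tl => h.
  rewrite /J expnS -mulnA; lia.
pose Om := {ffun 'I_t -> 'I_n'.+1}.
pose S (w : Om) : {set 'I_n'.+1} :=
  Hs n' J :|: \bigcup_(i < t) \bigcup_(j < J) Nb j (w i).
have PS (w : Om) i : Pset J (w i) \subset S w.
  by apply: setUS; exact: (bigcup_sup i).
exists (t + 2 + 8 * t * J)%N, Om, (fun _ => (n'.+1%:R ^+ t)^-1),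
  (fun w => enum (S w)),
  (fun w vals => fconvb (S w) (fun y => nth 0 vals (index y (enum (S w))))).
have Dsum : \sum_(w : Om) (n'.+1%:R ^+ t)^-1 = 1 :> R.
  rewrite sumr_const card_ffun !card_ord.
  have -> : forall x : R, x *+ (n'.+1 ^ t) = x * (n'.+1%:R ^+ t).
    by move=> x; rewrite -natrX mulr_natr.
  rewrite mulVf //.
  by rewrite expf_neq0 // pnatr_eq0.
split.
- have E : (t + 2 + 8 * t * J = t * (17 + 8 * tl) + 2)%N by rewrite /J; lia.
  rewrite E natrD natrM natrD natrM.
  set L := ln (Num.max 1 (eps * n'.+1%:R)).
  have M1 : 1 <= Num.max 1 (eps * n'.+1%:R) by rewrite le_max lexx.
  have L0 : 0 <= L by apply: ln_ge0.
  have ie : 1 <= eps^-1 by rewrite invf_ge1 //; lra.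
  have KL : (tl%:R : R) * l2 <= L.
    case: (posnP (n'.+1 %/ t)) => [z|pz].
    + by rewrite /tl z trunc_log0 mul0r.
    + have h2 := trunc_logP (isT : (1 < 2)%N) pz.
      have h3 : ((2 ^ tl)%N%:R : R) <= Num.max 1 (eps * n'.+1%:R).
        apply: (@le_trans _ _ (n'.+1 %/ t)%N%:R); first by rewrite ler_nat.
        rewrite le_max; apply/orP; right.
        have h4 : ((n'.+1 %/ t * t)%N%:R : R) <= n'.+1%:R by rewrite ler_nat leq_divM.
        rewrite natrM in h4.
        have tp : (0 : R) < t%:R by rewrite ltr0n.
        have : 2 < t%:R * eps by rewrite -ltr_pdivrMr.
        have : (0 : R) <= (n'.+1 %/ t)%N%:R by [].
        nra.
      have := h3; rewrite -ler_ln ?posrE ?ltr0n ?expn_gt0 //; last by lra.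
      by rewrite natrX lnXn // mulr_natl.
  apply: (num_bound (T := t%:R) (K := tl%:R) (L := L) (u := eps^-1) (v := l2^-1) _ _ L0 ie v0 _ _).
  + exact: ler0n.
  + exact: ler0n.
  + lra.
  + by rewrite ler_pdivlMr.
- split.
  + by split => // w; rewrite invr_ge0 exprn_ge0.
  + move=> w; rewrite -cardE.
    apply: leq_trans (leq_card_setU _ _).1 _.
    have h1 : (#|Hs n' J| <= t + 2)%N.
      apply: leq_trans (card_Hs n' J) _.
      have := leq_divM n'.+1 (2^J).
      set a := (n'.+1 %/ 2^J)%N; set p := (2^J)%N => hp.
      have : (2 * a * p < t * p)%N by lia.
      rewrite ltn_pmul2r ?expn_gt0 //; lia.
    have h2 : (#|\bigcup_(i < t) \bigcup_(j < J) Nb j (w i)| <= t * (J * 8))%N.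
      apply: (@leq_trans (\sum_(i < t) \sum_(j < J) 8)%N).
        apply: leq_trans (card_bigcup_le _) _; apply: leq_sum => i _.
        apply: leq_trans (card_bigcup_le _) _; apply: leq_sum => j _.
        exact: card_Nb.
      by rewrite !sum_nat_const !card_ord.
    apply: leq_trans (leq_add h1 h2) _; lia.
  + move=> f fc; rewrite /acc_prob.
    under eq_bigr do rewrite dec_map (convex_fconv _ fc) mulr1.
    exact: Dsum.
  + move=> f far; rewrite /acc_prob.
    under eq_bigr do rewrite dec_map.
    set G := [set x | fconvb (Pset J x) f].
    have hG : (#|G|%:R : R) <= n'.+1%:R - eps * n'.+1%:R.
      case: (posnP n') => [n0|npos].
      - have n1 : (n'.+1 <= 1)%N by rewrite n0.
        have := far f (convex_triv f n1).
        have -> : [set x | f x != f x] = set0 by apply/setP => x; rewrite !inE eqxx.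
        rewrite cards0 => h; exfalso.
        have : 0 < eps * n'.+1%:R by apply: mulr_gt0 => //; rewrite ltr0n.
        lra.
      - have [h [hc hag]] := ext (P := Pset J) (G := G) (f := f) (cf := @cf n') (cf' := @cf' n')
          (fun b bG => ltac:(by move: bG; rewrite inE))
          (fun b _ => @pair_prop n' J b npos (isT : (0 < J)%N))
          (fun b g _ _ bg => @split_prop n' J b g bg).
        have := far h hc.
        have sub : [set x | f x != h x] \subset ~: G.
          apply/subsetP => x; rewrite !inE; apply: contra => xG.
          by rewrite hag // inE.
        have := subset_leq_card sub.
        have := cardsC G; rewrite card_ord => cC.
        move=> le1 le2.
        have : (#|[set x | f x != h x]|%:R : R) <= (n'.+1 - #|G|)%N%:R.
          by rewrite ler_nat; lia.
        rewrite natrB; last by lia.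
        lra.
    apply: (@le_trans _ _ (\sum_(w : Om) (n'.+1%:R ^+ t)^-1 *
                             \prod_(i < t) ((w i \in G) : nat)%:R)).
      apply: ler_sum => w _; apply: ler_wpM2l; first by rewrite invr_ge0 exprn_ge0.
      case: (boolP (fconvb (S w) f)) => H /=.
      - rewrite big1 // => i _.
        have -> // : w i \in G.
        by rewrite inE; apply: fconv_sub H; apply: PS.
      - by apply: prodr_ge0 => i _; exact: ler0n.
    rewrite -mulr_sumr.
    rewrite -(bigA_distr_bigA (fun (i : 'I_t) (x : 'I_n'.+1) => ((x \in G) : nat)%:R : R)) /=.
    have -> : \sum_(x : 'I_n'.+1) ((x \in G) : nat)%:R = #|G|%:R :> R.
      rewrite (bigID (fun x => x \in G)) /=.
      have -> : \sum_(x | x \notin G) ((x \in G) : nat)%:R = 0 :> R.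
        by apply: big1 => x /negbTE ->.
      rewrite addr0 (eq_bigr (fun _ => 1)); last by move=> x ->.
      by rewrite sumr_const.
    rewrite prodr_const card_ord -exprVn -exprMn mulrC.
    have te : 2 < t%:R * eps by rewrite -ltr_pdivrMr.
    apply: (le_trans _ (pow_small e0 e1 te)).
    apply: lerXn2r.
    * by rewrite nnegrE divr_ge0.
    * by rewrite nnegrE; lra.
    rewrite ler_pdivrMr ?ltr0n //; lra.
Qed.
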